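(* For $\mathbf k\in\mathbb Z^{r'}_{++}$, $\mathbf l\in\mathbb Z^{r''}_{++}$ let $$C_0^d(\lambda,\mathbf k,\mathbf l)=\frac{\prod_{i=1}^{r'}\prod_{j=1}^{r''}(\lambda-\frac d2(i+j-1))_{k_i+l_j}}{\prod_{i=1}^{r'+1}\prod_{j=1}^{r''+1}(\lambda-\frac d2(i+j-2))_{k_i+l_j}},\qquad \phi_0(\mathbf k,\mathbf l)_a=\min\{k_i+l_j:1\le i\le r'+1,1\le j\le r''+1,i+j=a+1\}$$ ($1\le a\le r'+r''$, $k_{r'+1}=l_{r''+1}=0$). Let $1\le m_1'\le m_2'\le r'$ and $1\le m_1''\le m_2''\le r''$ with $k_1=\dots=k_{m_1'}$, $l_1=\dots=l_{m_1''}$ and $k_{m_2'+1}=l_{m_2''+1}=0$. Then the set of $\lambda\in\mathbb C$ where $(\lambda)_{\phi_0(\mathbf k,\mathbf l),d}C_0^d(\lambda,\mathbf k,\mathbf l)=0$ is contained in the real interval $$\Bigl[\tfrac d2\max\{m_1',m_1''\}-(k_1+l_1)+1,\ \tfrac d2(m_2'+m_2''-1)-\max\{k_{m_2'},l_{m_2''}\}\Bigr]$$ if $k_1l_1\ge1$, and is empty if $k_1l_1=0$. In particular, for $m=1,\dots,r'+r''-1$, if $\phi_0(\mathbf k,\mathbf l)_{m+1}=0$ and $\phi_0(\mathbf k,\mathbf l)_m\ne0$ (with $\phi_0(\mathbf k,\mathbf l)_{r'+r''+1}:=0$), then $C_0^d(\lambda,\mathbf k,\mathbf l)$ is holomorphic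 and non-zero at $\lambda=\frac d2 m$ and has a pole at $\lambda=\frac d2(m-1)$.
   Context: $r',r''\ge1$ are integers, $d>0$ is a real number, $\mathbb Z^s_{++}=\{\mathbf m\in\mathbb Z^s:m_1\ge\cdots\ge m_s\ge0\}$, $(a)_m=a(a+1)\cdots(a+m-1)$, and $(\lambda)_{\mathbf m,d}=\prod_{j=1}^{s}(\lambda-\frac d2(j-1))_{m_j}$ for $\mathbf m\in\mathbb Z^s_{\ge0}$. The product $(\lambda)_{\phi_0,d}C_0^d$ is an entire (polynomial) function of $\lambda$. *)

(* Defs.v *)
From HB Require Import structures.
From mathcomp Require Import all_boot all_order all_algebra.
From mathcomp Require Import complex.
Set Implicit Arguments. Unset Strict Implicit. Unset Printing Implicit Defensive.
Import Order.TTheory GRing.Theory Num.Theory.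
Local Open Scope ring_scope.

Section Defs.
Variable R : rcfType.
Local Notation C := R[i].

(* 1-based entries of a partition-like tuple k = (k_1,...,k_r') given as a
   seq of length r'; out of range entries (in particular k_{r'+1}) are 0. *)
Definition ent (k : seq nat) (i : nat) : nat := nth 0%N k i.-1.

Definition Zpp (k : seq nat) : bool := sorted geq k.

(* Pochhammer symbol (lambda - c)_m as a polynomial in lambda:
   prod_{i<m} (lambda - c + i) *)
Definition pochX (c : C) (m : nat) : {poly C} :=
  \prod_(i < m) ('X + (i%:R - c)%:P).

Definition rC (x : R) : C := x%:C%C.

Definition C0num (d : R) (k l : seq nat) : {poly C} :=
  \prod_(1 <= i < (size k).+1) \prod_(1 <= j < (size l).+1)
     pochX (rC (d / 2%:R * (i + j - 1)%N%:R)) (ent k i + ent l j).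

Definition C0den (d : R) (k l : seq nat) : {poly C} :=
  \prod_(1 <= i < (size k).+2) \prod_(1 <= j < (size l).+2)
     pochX (rC (d / 2%:R * (i + j - 2)%N%:R)) (ent k i + ent l j).

(* The index set is nonempty for 1 <= a <= r'+r''+1; the neutral element
   sumn k + sumn l bounds every k_i + l_j, so it does not affect the min.
   (For a = r'+r''+1 this gives k_{r'+1}+l_{r''+1} = 0, as in the paper.) *)
Definition phi0 (k l : seq nat) (a : nat) : nat :=
  \big[minn/(sumn k + sumn l)%N]_(1 <= i < (size k).+2 |
      (i <= a)%N && (a.+1 - i <= (size l).+1)%N)
     (ent k i + ent l (a.+1 - i))%N.

Definition pochphi (d : R) (k l : seq nat) : {poly C} :=
  \prod_(1 <= j < (size k + size l).+1)
     pochX (rC (d / 2%:R * (j - 1)%N%:R)) (phi0 k l j).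

End Defs.

(* Main.v *)
Require Import Defs.
From HB Require Import structures.
From mathcomp Require Import all_boot all_order all_algebra.
From mathcomp Require Import complex.
From mathcomp Require Import zify.
From mathcomp Require Import lra.
From Stdlib Require Classical_Prop.
Set Implicit Arguments. Unset Strict Implicit. Unset Printing Implicit Defensive.

Lemma sum_window N lo hi (c : pred nat) (f : nat -> nat) : hi <= N ->
  (forall i, i < N -> c i = (lo <= i < hi)) ->
  \sum_(0 <= i < N) (if c i then f i else 0) = \sum_(0 <= i < hi - lo) f (lo + i).
Proof.
move=> hN hc; case: (leqP hi lo) => hlo.
  have -> : hi - lo = 0 by lia.
  rewrite [RHS]big_geq // big_nat_cond big1 // => i /andP[/andP[_ iN] _].
  by rewrite hc // ifF //; apply/negbTE; apply/negP => /andP[]; lia.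
have hloN : lo <= N by lia.
rewrite (@big_cat_nat _ _ _ lo 0 N) //=.
rewrite (@big_cat_nat _ _ _ hi lo N) //=; last exact: ltnW.
have Z : forall m n, (forall i, m <= i < n -> ~~ (lo <= i < hi)) -> n <= N ->
  \sum_(m <= i < n) (if c i then f i else 0) = 0.
  move=> m n Hmn hn; rewrite big_nat_cond big1 // => i /andP[/andP[h1 h2] _].
  by rewrite hc ?(negbTE (Hmn i _)) //; [apply/andP | lia].
rewrite Z; last by lia. 2: by move=> i /andP[_ ?]; apply/negP => /andP[]; lia.
rewrite [X in _ + (_ + X)]Z //; last by move=> i /andP[? _]; apply/negP => /andP[]; lia.
rewrite add0n addn0.
rewrite -{1}[lo]add0n big_addn.
rewrite big_nat_cond [RHS]big_nat_cond; apply: eq_bigr => i /andP[/andP[_ hi'] _].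
by rewrite (addnC i lo) hc; [rewrite ifT //; apply/andP; split; lia | lia].
Qed.

Lemma down_all n (b : nat -> bool) : (forall i, i < n -> b i.+1 -> b i) -> b n ->
  all b (iota 0 n.+1).
Proof.
move=> hd hn; apply/allP => i; rewrite mem_iota add0n => /andP[_ hi].
have H : forall j, j <= n -> b (n - j).
  elim=> [|j IH] hj; first by rewrite subn0.
  apply: hd; first lia.
  have -> : (n - j.+1).+1 = n - j by lia.
  apply: IH; lia.
have := H (n - i) (leq_subr _ _).
by have -> : n - (n - i) = i by lia.
Qed.

Lemma Vlem n s (b c : nat -> bool) :
 (forall i, i < n -> i < s -> c i = b i /\ (b i.+1 -> b i)) ->
 (forall i, i < n -> s <= i -> c i = b i.+1 /\ (b i -> b i.+1)) ->
 all b (iota 0 n.+1) + \sum_(0 <= i < n) c i = \sum_(0 <= i < n.+1) b i.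
Proof.
elim: n => [|n IH] hp hs.
  by rewrite big_geq // big_nat1 /= andbT addn0.
have IH' := IH (fun i hi => hp i (ltnW hi)) (fun i hi => hs i (ltnW hi)).
have -> : iota 0 n.+2 = iota 0 n.+1 ++ [:: n.+1].
  by rewrite -addn1 iotaD.
rewrite big_nat_recr // [in RHS]big_nat_recr // -IH'.
rewrite all_cat [all b [:: n.+1]]/= andbT.
set A := all b (iota 0 n.+1).
have hA : A -> b n by move/allP; apply; rewrite mem_iota; lia.
case: (ltnP n s) => hns.
  have [-> hb] := hp n (ltnSn _) hns.
  have hA' : b n -> A.
    move=> bn; apply: down_all => // i hi; exact: (proj2 (hp i (ltnW hi) (ltn_trans hi hns))).
  move: hA hA' hb; case: A; case: (b n); case: (b n.+1) => H1 H2 H3 /=;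
    first [lia | by have := H1 isT | by have := H2 isT | by have := H3 isT].
have [-> hb] := hs n (ltnSn _) hns.
move: hA hb; case: A; case: (b n); case: (b n.+1) => H1 H2 /=;
  first [lia | by have := H1 isT | by have := H2 isT | by have := H2 (H1 isT)].
Qed.

Lemma diag_sum P Q (G : nat -> nat -> nat) :
  \sum_(0 <= i < P) \sum_(0 <= j < Q) G i j =
  \sum_(0 <= s < P + Q) \sum_(0 <= i < P) (if (i <= s) && (s - i < Q) then G i (s - i) else 0).
Proof.
rewrite [RHS]exchange_big_nat; apply: eq_big_nat => i /andP[_ hi].
rewrite (@sum_window (P + Q) i (i + Q) (fun s => (i <= s) && (s - i < Q)) (fun s => G i (s - i))).
- have -> : i + Q - i = Q by lia.
  by apply: eq_bigr => j _; have -> : i + j - i = j by lia.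
- lia.
- by move=> s hs; apply/idP/idP => /andP[h1 h2]; apply/andP; split; lia.
Qed.

Lemma ent_mono (k : seq nat) i j : Zpp k -> i <= j -> ent k j <= ent k i.
Proof.
move=> hk hij; rewrite /ent.
case: (ltnP j.-1 (size k)) => hj; last by rewrite nth_default.
have := @sorted_leq_nth _ geq _ _ 0 _ hk i.-1 j.-1.
rewrite !inE /=; apply.
- by move=> x y z /= h1 h2; apply: leq_trans h2 h1.
- by move=> x /=.
- lia.
- lia.
- lia.
Qed.

Lemma ent0 (k : seq nat) : ent k 0 = ent k 1. Proof. by []. Qed.

Lemma ent_le_sumn (k : seq nat) i : ent k i <= sumn k.
Proof.
rewrite /ent; elim: k (i.-1) => [|x s IH] [|j] //=; first exact: leq_addr.
by apply: leq_trans (IH j) (leq_addl _ _).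
Qed.

Lemma bigmin_gt (I : Type) (r : seq I) (P : pred I) (F : I -> nat) x0 t :
  (t < \big[minn/x0]_(i <- r | P i) F i) = (t < x0) && all (fun i => P i ==> (t < F i)) r.
Proof.
elim: r => [|a r IH]; first by rewrite big_nil andbT.
rewrite big_cons /=; case: (P a) => /=; last by rewrite IH.
by rewrite leq_min IH; case: (t < F a); case: (t < x0); case: all.
Qed.

Lemma bigmin_le (I : eqType) (r : seq I) (P : pred I) (F : I -> nat) x0 i0 :
  P i0 -> i0 \in r -> \big[minn/x0]_(i <- r | P i) F i <= F i0.
Proof.
move=> P0 hin; rewrite leqNgt bigmin_gt; apply/negP => /andP[_ /allP H].
by have := H i0 hin; rewrite P0 /= ltnn.
Qed.

Lemma bigmin_le0 (I : Type) (r : seq I) (P : pred I) (F : I -> nat) x0 :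
  \big[minn/x0]_(i <- r | P i) F i <= x0.
Proof. by rewrite leqNgt bigmin_gt; apply/negP => /andP[]; rewrite ltnn. Qed.

Section Comb.
Variables (k l : seq nat).
Hypotheses (hk : Zpp k) (hl : Zpp l).
Local Notation K := (ent k).
Local Notation L := (ent l).
Local Notation p := (size k).
Local Notation q := (size l).

Definition Dv b i := K i.+1 + L (b - i).+1.
Definition Nv b i := K i.+1 + L (b - i).
Definition DS b t := \sum_(0 <= i < p.+1) (if (i <= b) && (b - i < q.+1) then (t < Dv b i : nat) else 0).
Definition NS b t := \sum_(0 <= i < p) (if (i < b) && (b.-1 - i < q) then (t < Nv b i : nat) else 0).
Definition EqD b t := (t < phi0 k l b.+1) + NS b t = DS b t.

Lemma phi_char b t : b <= p + q ->
  (t < phi0 k l b.+1) = all (fun i => t < Dv b (b - q + i)) (iota 0 (minn p b - (b - q)).+1).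
Proof.
move=> hb; rewrite /phi0 bigmin_gt.
apply/idP/idP.
  move=> /andP[_ /allP H]; apply/allP => i; rewrite mem_iota add0n => /andP[_ hi].
  have := H (b - q + i).+1; rewrite mem_index_iota.
  have -> : (b.+2 - (b - q + i).+1) = (b - (b - q + i)).+1 by lia.
  move=> H1; rewrite /Dv; apply: (implyP (H1 _)).
    by apply/andP; split; lia.
  by apply/andP; split; lia.
move=> /allP H; apply/andP; split.
  have := H 0; rewrite mem_iota /= addn0 => /(_ isT) /leq_trans; apply.
  by rewrite /Dv leq_add // ent_le_sumn.
apply/allP => i; rewrite mem_index_iota => hi; apply/implyP => /andP[h1 h2].
have := H (i.-1 - (b - q)); rewrite mem_iota add0n /Dv.
have -> : b - q + (i.-1 - (b - q)) = i.-1 by lia.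
have -> : i.-1.+1 = i by lia.
have -> : (b - i.-1).+1 = b.+2 - i by lia.
by apply; lia.
Qed.

Lemma EqV b t s : b <= p + q ->
 (forall i, i < minn p b - (b - q) -> i < s ->
    (t < Nv b (b - q + i)) = (t < Dv b (b - q + i)) /\
    ((t < Dv b (b - q + i.+1)) -> (t < Dv b (b - q + i)))) ->
 (forall i, i < minn p b - (b - q) -> s <= i ->
    (t < Nv b (b - q + i)) = (t < Dv b (b - q + i.+1)) /\
    ((t < Dv b (b - q + i)) -> t < Dv b (b - q + i.+1))) ->
 EqD b t.
Proof.
move=> hb hp hs; rewrite /EqD /DS /NS.
rewrite (@sum_window p.+1 (b - q) (minn p b).+1 (fun i => (i <= b) && (b - i < q.+1))
   (fun i => t < Dv b i)); last 2 first.
- lia.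
- by move=> i hi; apply/idP/idP => /andP[h1 h2]; apply/andP; split; lia.
rewrite (@sum_window p (b - q) (minn p b) (fun i => (i < b) && (b.-1 - i < q))
   (fun i => t < Nv b i)); last 2 first.
- lia.
- by move=> i hi; apply/idP/idP => /andP[h1 h2]; apply/andP; split; lia.
have -> : (minn p b).+1 - (b - q) = (minn p b - (b - q)).+1 by lia.
rewrite phi_char //.
apply: (@Vlem _ s (fun i => t < Dv b (b - q + i)) (fun i => t < Nv b (b - q + i))) => i hi hi'.
  by have := hp i hi hi'.
by have := hs i hi hi'.
Qed.


Lemma monoK i j : i <= j -> K j <= K i. Proof. exact: ent_mono. Qed.
Lemma monoL i j : i <= j -> L j <= L i. Proof. exact: ent_mono. Qed.

Lemma EqA b t : (forall i, 1 <= i <= b.+1 -> K i = K 1) -> b <= p + q -> EqD b t.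
Proof.
move=> hK hb; apply: (@EqV b t 0) => // i hi _.
rewrite /Nv /Dv.
rewrite (hK (b - q + i).+1); last by apply/andP; split; lia.
rewrite (hK (b - q + i.+1).+1); last by apply/andP; split; lia.
have -> : (b - (b - q + i.+1)).+1 = b - (b - q + i) by lia.
split=> // h; apply: leq_trans h _; rewrite leq_add2l; apply: monoL; lia.
Qed.

Lemma EqA' b t : (forall j, 1 <= j <= b.+1 -> L j = L 1) -> b <= p + q -> EqD b t.
Proof.
move=> hL hb; apply: (@EqV b t (minn p b - (b - q))) => // i hi hs; last lia.
rewrite /Nv /Dv.
rewrite (hL (b - (b - q + i)).+1); last by apply/andP; split; lia.
rewrite (hL (b - (b - q + i))); last by apply/andP; split; lia.
have -> : (b - (b - q + i.+1)).+1 = b - (b - q + i) by lia.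
rewrite (hL (b - (b - q + i))); last by apply/andP; split; lia.
split=> // h; apply: leq_trans h _; rewrite leq_add2r; apply: monoK; lia.
Qed.

Lemma suffixK b t m2 i : K m2.+1 = 0 -> m2 <= b - q + i -> b - q + i < b ->
  (t < Nv b (b - q + i)) = (t < Dv b (b - q + i.+1)) /\
  ((t < Dv b (b - q + i)) -> t < Dv b (b - q + i.+1)).
Proof.
move=> hK h1 h2; rewrite /Nv /Dv.
have z1 : K (b - q + i).+1 = 0 by apply/eqP; rewrite -leqn0 -hK monoK.
have z2 : K (b - q + i.+1).+1 = 0 by apply/eqP; rewrite -leqn0 -hK monoK //; lia.
rewrite z1 z2 !add0n.
have -> : (b - (b - q + i.+1)).+1 = b - (b - q + i) by lia.
split=> // h; apply: leq_trans h _; apply: monoL; lia.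
Qed.

Lemma EqB b t m2' m2'' : K m2'.+1 = 0 -> L m2''.+1 = 0 -> m2' + m2'' <= b ->
  b <= p + q -> EqD b t.
Proof.
move=> hK hL hm hb; apply: (@EqV b t (m2' - (b - q))) => // i hi hs.
  rewrite /Nv /Dv.
  have z1 : L (b - (b - q + i)) = 0 by apply/eqP; rewrite -leqn0 -hL monoL //; lia.
  have z2 : L (b - (b - q + i)).+1 = 0 by apply/eqP; rewrite -leqn0 -hL monoL //; lia.
  have -> : (b - (b - q + i.+1)).+1 = b - (b - q + i) by lia.
  rewrite z1 z2 !addn0; split=> // h; apply: leq_trans h _; apply: monoK; lia.
apply: (@suffixK b t m2') => //; lia.
Qed.

Lemma EqC1 b t m2' : K m2'.+1 = 0 -> t < K m2' -> b <= p + q -> EqD b t.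
Proof.
move=> hK ht hb; apply: (@EqV b t (m2' - (b - q))) => // i hi hs.
  rewrite /Nv /Dv.
  have h1 : t < K (b - q + i).+1 by apply: leq_trans ht _; apply: monoK; lia.
  have h2 : t < K (b - q + i).+1 + L (b - (b - q + i)) by apply: leq_trans h1 (leq_addr _ _).
  have h3 : t < K (b - q + i).+1 + L (b - (b - q + i)).+1 by apply: leq_trans h1 (leq_addr _ _).
  by rewrite h2 h3.
apply: (@suffixK b t m2') => //; lia.
Qed.

Lemma EqC2 b t m2'' : L m2''.+1 = 0 -> t < L m2'' -> b <= p + q -> EqD b t.
Proof.
move=> hL ht hb; apply: (@EqV b t (b - m2'' - (b - q))) => // i hi hs.
  rewrite /Nv /Dv.
  have z1 : L (b - (b - q + i)) = 0 by apply/eqP; rewrite -leqn0 -hL monoL //; lia.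
  have z2 : L (b - (b - q + i)).+1 = 0 by apply/eqP; rewrite -leqn0 -hL monoL //; lia.
  have -> : (b - (b - q + i.+1)).+1 = b - (b - q + i) by lia.
  rewrite z1 z2 !addn0; split=> // h; apply: leq_trans h _; apply: monoK; lia.
rewrite /Nv /Dv.
have h1 : t < L (b - (b - q + i)) by apply: leq_trans ht _; apply: monoL; lia.
have -> : (b - (b - q + i.+1)).+1 = b - (b - q + i) by lia.
have h2 : t < K (b - q + i).+1 + L (b - (b - q + i)) by apply: leq_trans h1 (leq_addl _ _).
have h3 : t < K (b - q + i.+1).+1 + L (b - (b - q + i)) by apply: leq_trans h1 (leq_addl _ _).
by rewrite h2 h3.
Qed.

Lemma EqBig b t : K 1 + L 1 <= t -> b <= p + q -> EqD b t.
Proof.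
move=> ht hb; apply: (@EqV b t 0) => // i hi _.
have F : forall x y, t < K x + L y = false.
  move=> x y; apply/negbTE; rewrite -leqNgt; apply: leq_trans _ ht.
  by apply: leq_add; [rewrite -ent0 monoK | rewrite -ent0 monoL].
by rewrite /Nv /Dv !F.
Qed.


Lemma phi_le a i : 1 <= i < p.+2 -> i <= a -> a.+1 - i <= q.+1 ->
  phi0 k l a <= K i + L (a.+1 - i).
Proof.
move=> h1 h2 h3; rewrite /phi0; apply: (@bigmin_le _ _ _ (fun i => K i + L (a.+1 - i))).
  by rewrite h2 h3.
by rewrite mem_index_iota.
Qed.

Lemma phi_last : phi0 k l (p + q).+1 = 0.
Proof.
apply/eqP; rewrite -leqn0; apply: leq_trans (@phi_le _ p.+1 _ _ _) _.
- by apply/andP; split.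
- lia.
- lia.
have -> : (p + q).+2 - p.+1 = q.+1 by lia.
by rewrite /ent !nth_default.
Qed.

Lemma phi_wit a : phi0 k l a = 0 -> sumn k + sumn l = 0 \/
  exists i, [/\ 1 <= i < p.+2, i <= a, a.+1 - i <= q.+1 & K i + L (a.+1 - i) = 0].
Proof.
move=> h0; have := bigmin_gt (index_iota 1 p.+2) (fun i => (i <= a) && (a.+1 - i <= q.+1))
  (fun i => K i + L (a.+1 - i)) (sumn k + sumn l) 0.
rewrite -/(phi0 k l a) h0 ltnn.
case: (posnP (sumn k + sumn l)) => [->|hpos]; first by left.
rewrite andTb => /esym/negbT H; case: (allPn H) => i hin.
rewrite negb_imply => /andP[/andP[h1 h2]]; rewrite lt0n negbK => /eqP h3.
right; exists i; split=> //; by rewrite mem_index_iota in hin.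
Qed.

Lemma phi_tail m : phi0 k l m.+1 = 0 -> forall a, m.+1 <= a <= p + q.+1 -> phi0 k l a = 0.
Proof.
move=> h0 a /andP[ha1 ha2]; apply/eqP; rewrite -leqn0.
case: (phi_wit h0) => [hs|[i [/andP[hi1 hi2] hi3 hi4 hi5]]].
  by rewrite -hs /phi0 bigmin_le0.
have hKi : K i = 0 by lia.
have hLi : L (m.+2 - i) = 0 by lia.
set i' := maxn i (a - q).
apply: leq_trans (@phi_le a i' _ _ _) _.
- by apply/andP; split; lia.
- lia.
- lia.
have -> : K i' = 0 by apply/eqP; rewrite -leqn0 -hKi monoK //; lia.
by rewrite add0n -hLi monoL //; lia.
Qed.

End Comb.

Import Order.TTheory GRing.Theory Num.Theory.
Local Open Scope ring_scope.

Section Poly.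
Variable R : rcfType.
Local Notation C := R[i].

Lemma pochX_monic (c : C) m : pochX c m \is monic.
Proof. by apply: monic_prod => i _; apply: monicXaddC. Qed.

Lemma pochX_neq0 (c : C) m : pochX c m != 0.
Proof. exact/monic_neq0/pochX_monic. Qed.

Lemma mup_prod (x : C) (I : Type) (r : seq I) (P : pred I) (F : I -> {poly C}) :
  (forall i, P i -> F i != 0) ->
  mup x (\prod_(i <- r | P i) F i) = (\sum_(i <- r | P i) mup x (F i))%N.
Proof.
move=> hF.
have H := @big_ind2 _ _ (fun (p : {poly C}) (n : nat) => p != 0 /\ mup x p = n)
  1 *%R 0%N addn _ _ I r P F (fun i => mup x (F i)).
apply: (proj2 (H _ _ _)).
- by split; [exact: oner_neq0 | rewrite mupNroot // root1].
- move=> p1 n1 p2 n2 [h1 <-] [h2 <-]; split; first exact: mulf_neq0.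
  exact: mupM.
- by move=> i Pi; split; [exact: hF|].
Qed.

Lemma prod_neq0 (I : Type) (r : seq I) (P : pred I) (F : I -> {poly C}) :
  (forall i, P i -> F i != 0) -> \prod_(i <- r | P i) F i != 0.
Proof.
move=> hF; elim: r => [|a r IH]; first by rewrite big_nil oner_neq0.
by rewrite big_cons; case: ifP => // /hF h; rewrite mulf_neq0.
Qed.

Lemma mup_pochX (x c : C) m : mup x (pochX c m) = (\sum_(i < m) ((c - i%:R)%R == x))%N.
Proof.
rewrite /pochX mup_prod; last by move=> i _; apply: monic_neq0; apply: monicXaddC.
apply: eq_bigr => i _.
have -> : 'X + (i%:R - c)%:P = ('X - (c - i%:R)%:P) ^+ 1.
  by rewrite expr1 -polyCN opprB.
by rewrite mup_XsubCX.
Qed.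

Lemma sum_eq_t m t : (\sum_(i < m) (i == t :> nat))%N = (t < m)%N.
Proof.
elim: m => [|m IH]; first by rewrite big_ord0.
rewrite big_ord_recr /= IH; case: eqP => [->|ne] /=; lia.
Qed.

Lemma I_cases (x c : C) :
  (forall m, mup x (pochX c m) = 0%N) \/
  exists t, x = c - t%:R /\ forall m, mup x (pochX c m) = (t < m)%N.
Proof.
case: (Classical_Prop.classic (exists t : nat, x = c - t%:R)) => [[t ->]|hn].
  right; exists t; split=> // m; rewrite mup_pochX -sum_eq_t.
  apply: eq_bigr => i _.
  by rewrite (inj_eq (addrI c)) (inj_eq oppr_inj) eqr_nat.
left=> m; rewrite mup_pochX big1 // => i _; case: eqP => // h.
by exfalso; apply: hn; exists i; rewrite h.
Qed.

End Poly.

Section Key.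
Variables (R : rcfType) (d : R) (k l : seq nat).
Local Notation p := (size k).
Local Notation q := (size l).
Hypotheses (hk : Zpp k) (hl : Zpp l).
Local Notation Im lam b m := (mup lam (pochX (rC (d / 2%:R * b%:R)) m)).

Lemma mden_eq (lam : R[i]) : mup lam (C0den d k l) =
  (\sum_(0 <= b < p.+1 + q.+1) \sum_(0 <= i < p.+1)
     (if (i <= b) && (b - i < q.+1) then Im lam b (Dv k l b i) else 0))%N.
Proof.
rewrite /C0den mup_prod; last by move=> i _; apply: prod_neq0 => j _; apply: pochX_neq0.
rewrite (eq_bigr (fun i => \sum_(1 <= j < q.+2)
   mup lam (pochX (rC (d / 2%:R * (i + j - 2)%N%:R)) (ent k i + ent l j)))%N); last first.
  by move=> i _; rewrite mup_prod // => j _; apply: pochX_neq0.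
rewrite big_add1 /=.
under eq_bigr do rewrite big_add1 /=.
rewrite diag_sum; apply: eq_bigr => b _; apply: eq_bigr => i _.
case: ifP => // /andP[h1 h2].
have -> : (i.+1 + (b - i).+1 - 2 = b)%N by lia.
by [].
Qed.

Lemma mnum_eq (lam : R[i]) : mup lam (C0num d k l) =
  (\sum_(0 <= s < p + q) \sum_(0 <= i < p)
     (if (i < s.+1) && (s.+1.-1 - i < q) then Im lam s.+1 (Nv k l s.+1 i) else 0))%N.
Proof.
rewrite /C0num mup_prod; last by move=> i _; apply: prod_neq0 => j _; apply: pochX_neq0.
rewrite (eq_bigr (fun i => \sum_(1 <= j < q.+1)
   mup lam (pochX (rC (d / 2%:R * (i + j - 1)%N%:R)) (ent k i + ent l j)))%N); last first.
  by move=> i _; rewrite mup_prod // => j _; apply: pochX_neq0.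
rewrite big_add1 /=.
under eq_bigr do rewrite big_add1 /=.
rewrite diag_sum; apply: eq_bigr => s _; apply: eq_bigr => i _.
rewrite ltnS /=; case: ifP => // /andP[h1 h2].
have -> : (i.+1 + (s - i).+1 - 1 = s.+1)%N by lia.
by rewrite /Nv; have -> : (s.+1 - i = (s - i).+1)%N by lia.
Qed.

Lemma mP_eq (lam : R[i]) : mup lam (pochphi d k l) =
  (\sum_(0 <= b < p + q) Im lam b (phi0 k l b.+1))%N.
Proof.
rewrite /pochphi mup_prod; last by move=> i _; apply: pochX_neq0.
rewrite big_add1 /=; apply: eq_bigr => b _.
by rewrite subn1 /=.
Qed.


Lemma Im0 (lam : R[i]) b : Im lam b 0%N = 0%N.
Proof. by rewrite mup_pochX big_ord0. Qed.

Lemma key (lam : R[i]) :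
 (forall b t, (b <= p + q)%N -> lam = rC (d / 2%:R * b%:R) - t%:R -> EqD k l b t) ->
 (mup lam (pochphi d k l) + mup lam (C0num d k l) = mup lam (C0den d k l))%N.
Proof.
move=> H; rewrite mP_eq mnum_eq mden_eq.
set Dd := fun b => (\sum_(0 <= i < p.+1)
     (if (i <= b) && (b - i < q.+1) then Im lam b (Dv k l b i) else 0))%N.
set Nd := fun b => (\sum_(0 <= i < p)
     (if (i < b) && (b.-1 - i < q) then Im lam b (Nv k l b i) else 0))%N.
have PD : forall b, (b <= p + q)%N -> (Im lam b (phi0 k l b.+1) + Nd b = Dd b)%N.
  move=> b hb; case: (I_cases lam (rC (d / 2%:R * b%:R))) => [Z | [t [ht E]]].
    rewrite Z /Nd /Dd big1 ?[RHS]big1 // => i _; by case: ifP; rewrite ?Z.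
  have E1 : Nd b = NS k l b t by apply: eq_bigr => i _; case: ifP; rewrite ?E.
  have E2 : Dd b = DS k l b t by apply: eq_bigr => i _; case: ifP; rewrite ?E.
  rewrite E1 E2 E; exact: H b t hb ht.
have -> : (p.+1 + q.+1 = (p + q).+2)%N by lia.
rewrite [in RHS](eq_bigr (fun b => Dd b)) // [X in (_ + X)%N](eq_bigr (fun s => Nd s.+1)) //.
rewrite big_nat_recr //=.
have -> : Dd (p + q).+1 = 0%N.
  rewrite /Dd big_nat_cond big1 // => i /andP[/andP[_ hi] _]; rewrite ifF //.
  by apply/negbTE; apply/negP => /andP[]; lia.
rewrite addn0 (@eq_big_nat _ _ _ 0 (p + q).+1 Dd (fun b => Im lam b (phi0 k l b.+1) + Nd b)%N); last first.
  by move=> b /andP[_ hb]; rewrite PD.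
rewrite big_split /= big_nat_recr //= (phi_last hk hl) Im0 addn0.
rewrite [in RHS]big_nat_recl //.
have -> : Nd 0%N = 0%N by rewrite /Nd big1.
by rewrite add0n.
Qed.

End Key.

Section Aux.
Variable R : rcfType.

Lemma rC_sub (x : R) (t : nat) : rC x - t%:R = rC (x - t%:R).
Proof. by rewrite /rC rmorphB rmorph_nat. Qed.

Lemma rC_inj (x y : R) : rC x = rC y -> x = y.
Proof. exact: complexI. Qed.

Lemma shift_ge (h : R) (m b t : nat) : 0 < h -> h * m%:R = h * b%:R - t%:R -> (m <= b)%N.
Proof.
move=> hh E; rewrite leqNgt; apply/negP => hb.
have H1 : h * b%:R < h * m%:R by rewrite ltr_pM2l // ltr_nat.
have H2 : 0 <= t%:R :> R by rewrite ler0n.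
move: E H1 H2; set X := h * m%:R; set Y := h * b%:R; set T := t%:R => E H1 H2; lra.
Qed.

Lemma shift_eq (h : R) (b t : nat) : h * b%:R = h * b%:R - t%:R -> t = 0%N.
Proof.
move=> E; apply/eqP; rewrite -(eqr_nat R) ; apply/eqP.
move: E; set Y := h * b%:R; set T := t%:R => E; lra.
Qed.

End Aux.

Lemma sum_ge_term (n j : nat) (F : nat -> nat) : (j < n)%N -> (F j <= \sum_(0 <= b < n) F b)%N.
Proof.
move=> hj; rewrite (@big_cat_nat _ _ _ j 0 n) //=; last exact: ltnW.
by rewrite [X in (_ + X)%N]big_ltn // addnCA leq_addr.
Qed.

Unset Implicit Arguments.
Theorem proposition5p5 (R : rcfType) (d : R) (k l : seq nat) :
  0 < d -> (0 < size k)%N -> (0 < size l)%N -> Zpp k -> Zpp l ->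
  (* main part: zeros of the polynomial (lambda)_{phi0,d} C_0^d *)
  (forall (m1' m2' m1'' m2'' : nat),
     (1 <= m1' <= m2')%N -> (m2' <= size k)%N ->
     (1 <= m1'' <= m2'')%N -> (m2'' <= size l)%N ->
     (forall i, (1 <= i <= m1')%N -> ent k i = ent k 1) ->
     (forall j, (1 <= j <= m1'')%N -> ent l j = ent l 1) ->
     ent k m2'.+1 = 0%N -> ent l m2''.+1 = 0%N ->
     forall (Q : {poly R[i]}),
       Q * C0den d k l = pochphi d k l * C0num d k l ->
       forall lam : R[i], root Q lam ->
         if (ent k 1 * ent l 1 == 0)%N then False
         else exists x : R, lam = rC x /\
           d / 2%:R * (maxn m1' m1'')%:R - (ent k 1 + ent l 1)%:R + 1 <= x /\
           x <= d / 2%:R * (m2' + m2'' - 1)%N%:R - (maxn (ent k m2') (ent l m2''))%:R)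
  /\
  (* "in particular" part *)
  (forall m : nat, (1 <= m)%N -> (m <= size k + size l - 1)%N ->
     phi0 k l m.+1 = 0%N -> phi0 k l m <> 0%N ->
     mup (rC (d / 2%:R * m%:R)) (C0num d k l)
       = mup (rC (d / 2%:R * m%:R)) (C0den d k l)
     /\ (mup (rC (d / 2%:R * m.-1%:R)) (C0num d k l)
       < mup (rC (d / 2%:R * m.-1%:R)) (C0den d k l))%N).
Proof.
move=> hd hp hq hk hl.
set h := d / 2%:R.
have hh : 0 < h by rewrite /h divr_gt0 // ltr0n.
have K0 : forall i, ent k 1 = 0%N -> ent k i = 0%N.
  by move=> i h0; apply/eqP; rewrite -leqn0 -h0 -ent0 ent_mono.
have L0 : forall i, ent l 1 = 0%N -> ent l i = 0%N.
  by move=> i h0; apply/eqP; rewrite -leqn0 -h0 -ent0 ent_mono.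
have zero_case : (ent k 1 * ent l 1 == 0)%N -> forall b t, (b <= size k + size l)%N -> EqD k l b t.
  rewrite muln_eq0 => /orP[] /eqP h0 b t hb.
    by apply: (EqA hk hl) => // i _; rewrite K0 // h0.
  by apply: (EqA' hk hl) => // i _; rewrite L0 // h0.
have nzP : pochphi d k l != 0 by apply: prod_neq0 => i _; apply: pochX_neq0.
have nzN : C0num d k l != 0 by apply: prod_neq0 => i _; apply: prod_neq0 => j _; apply: pochX_neq0.
have nzD : C0den d k l != 0 by apply: prod_neq0 => i _; apply: prod_neq0 => j _; apply: pochX_neq0.
split.
  move=> m1' m2' m1'' m2'' /andP[hm1 hm12] hm2 /andP[hn1 hn12] hn2 hK1 hL1 hK2 hL2 Q HQ lam hroot.
  have hQ0 : Q != 0.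
    apply/eqP => Q0; move: HQ; rewrite Q0 mul0r => /esym/eqP.
    by rewrite mulf_eq0 (negbTE nzP) (negbTE nzN).
  have Hm : (mup lam Q + mup lam (C0den d k l) = mup lam (pochphi d k l) + mup lam (C0num d k l))%N.
    by rewrite -!mupM // HQ.
  have hpos : (0 < mup lam Q)%N by rewrite -XsubC_dvd // dvdp_XsubCl.
  case: (Classical_Prop.classic (exists b t, (b <= size k + size l)%N /\
     lam = rC (h * b%:R) - t%:R /\ ~ EqD k l b t)) => [[b [t [hb [ht hne]]]] | hn]; last first.
    exfalso.
    have HK : (mup lam (pochphi d k l) + mup lam (C0num d k l) = mup lam (C0den d k l))%N.
      apply: (key hk hl) => b t hb ht; apply: Classical_Prop.NNPP => hne; apply: hn.
      by exists b, t.
    lia.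
  case: ifP => hKL; first by apply: hne; apply: zero_case.
  move: hKL; rewrite muln_eq0 => /negbT; rewrite negb_or => /andP[hK1n hL1n].
  exists (h * b%:R - t%:R); split; first by rewrite ht rC_sub.
  have hbM : (maxn m1' m1'' <= b)%N.
    rewrite leqNgt; apply/negP => hlt; apply: hne.
    case: (leqP b.+1 m1') => hb1.
      by apply: (EqA hk hl) => // i /andP[h1 h2]; apply: hK1; apply/andP; split; lia.
    by apply: (EqA' hk hl) => // i /andP[h1 h2]; apply: hL1; apply/andP; split; lia.
  have ht1 : (t < ent k 1 + ent l 1)%N.
    rewrite ltnNge; apply/negP => hge; apply: hne; exact: (EqBig hk hl).
  have hb2 : (b <= m2' + m2'' - 1)%N.
    rewrite leqNgt; apply/negP => hlt; apply: hne; apply: (@EqB k l hk hl b t m2' m2'' hK2 hL2) => //; lia.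
  have ht2 : (maxn (ent k m2') (ent l m2'') <= t)%N.
    rewrite geq_max; apply/andP; split; rewrite leqNgt; apply/negP => hlt; apply: hne.
      exact: (EqC1 hk hl hK2).
    exact: (EqC2 hk hl hL2).
  have E1 : h * (maxn m1' m1'')%:R <= h * b%:R by apply: ler_wpM2l; [exact: ltW | rewrite ler_nat].
  have E2 : h * b%:R <= h * (m2' + m2'' - 1)%N%:R by apply: ler_wpM2l; [exact: ltW | rewrite ler_nat].
  have E3 : t%:R + 1 <= (ent k 1 + ent l 1)%:R :> R by rewrite natr1 ler_nat.
  have E4 : (maxn (ent k m2') (ent l m2''))%:R <= t%:R :> R by rewrite ler_nat.
  move: E1 E2 E3 E4; set A := h * (maxn m1' m1'')%:R; set B := h * b%:R;
    set C := h * (m2' + m2'' - 1)%N%:R; set T := t%:R; set S := (ent k 1 + ent l 1)%:R;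
    set M := (maxn _ _)%:R => E1 E2 E3 E4.
  split; lra.
move=> m hm1 hm2 hphi1 hphi0.
have KEY : forall lam : R[i],
   (forall b t, (b <= size k + size l)%N -> lam = rC (h * b%:R) - t%:R -> EqD k l b t) ->
   (mup lam (pochphi d k l) + mup lam (C0num d k l) = mup lam (C0den d k l))%N.
  by move=> lam; apply: (key hk hl).
have HYP : forall (m0 : nat), (m0 = m \/ m0 = m.-1) ->
   forall b t, (b <= size k + size l)%N -> rC (h * m0%:R) = rC (h * b%:R) - t%:R -> EqD k l b t.
  move=> m0 hm0 b t hb ht.
  case hKL : (ent k 1 * ent l 1 == 0)%N; first exact: zero_case.
  move: hKL; rewrite muln_eq0 => /negbT; rewrite negb_or => /andP[hK1n hL1n].
  have ht' : h * m0%:R = h * b%:R - t%:R by apply: rC_inj; rewrite -rC_sub.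
  have hmb := shift_ge hh ht'.
  case: (phi_wit hphi1) => [hs | [i [/andP[hi1 hi2] hi3 hi4 hi5]]].
    exfalso; move: hK1n; rewrite -lt0n => /leq_trans/(_ (ent_le_sumn _ _)); lia.
  have hKi : ent k i = 0%N by lia.
  have hLi : ent l (m.+2 - i) = 0%N by lia.
  have hi2' : (2 <= i)%N.
    rewrite ltnNge; apply/negP => hi; have hi' : i = 1%N by lia.
    by move: hK1n; rewrite -hi' hKi.
  have hj2 : (i <= m)%N.
    rewrite leqNgt; apply/negP => hi; have hi' : (m.+2 - i = 1)%N by lia.
    by move: hL1n; rewrite -hi' hLi.
  have hK2 : ent k i.-1.+1 = 0%N by rewrite prednK //; lia.
  have hL2 : ent l (m.+1 - i).+1 = 0%N by rewrite -hLi; congr ent; lia.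
  case: (leqP m b) => hbm.
    apply: (@EqB k l hk hl b t i.-1 (m.+1 - i) hK2 hL2) => //; lia.
  case: hm0 => hm0; first by subst m0; lia.
  have hbe : b = m.-1 by subst m0; lia.
  subst m0 b; have t0 := shift_eq ht'; subst t.
  apply: (@EqC1 k l hk hl m.-1 0%N i.-1 hK2) => //.
  have Hle : (phi0 k l m <= ent k i.-1)%N.
    have := @phi_le k l m i.-1.
    have -> : (m.+1 - i.-1 = m.+2 - i)%N by lia.
    rewrite hLi addn0; apply; [apply/andP; split | |]; lia.
  rewrite lt0n; apply/eqP => H0; apply: hphi0; lia.
have EQ1 := KEY _ (HYP m (or_introl erefl)).
have EQ0 := KEY _ (HYP m.-1 (or_intror erefl)).
have P1 : mup (rC (h * m%:R)) (pochphi d k l) = 0%N.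
  rewrite mP_eq big_nat_cond big1 // => b /andP[/andP[_ hb] _].
  case: (leqP m b) => hmb.
    rewrite (phi_tail hk hl hphi1) ?mup_pochX ?big_ord0 //; apply/andP; split; lia.
  rewrite mup_pochX big1 // => i _; case: eqP => // E; exfalso.
  move: E; rewrite rC_sub => /rC_inj E.
  have H1 : h * b%:R < h * m%:R by rewrite ltr_pM2l // ltr_nat.
  have H2 : 0 <= i%:R :> R by rewrite ler0n.
  move: E H1 H2; set X := h * m%:R; set Y := h * b%:R; set T := i%:R => E H1 H2; lra.
have P0 : (0 < mup (rC (h * m.-1%:R)) (pochphi d k l))%N.
  rewrite mP_eq.
  apply: leq_trans (@sum_ge_term (size k + size l) m.-1
     (fun b => mup (rC (h * m.-1%:R)) (pochX (rC (h * b%:R)) (phi0 k l b.+1))) _); last lia.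
  rewrite /= prednK // mup_pochX.
  case E : (phi0 k l m) => [|n]; first by [].
  by rewrite big_ord_recl /= subr0 eqxx.
split; lia.
Qed.
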